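(* Consider formal expressions built from one variable $x$ and real constants using only the binary operators $+,-,\times,\div$ (with parentheses allowed freely), and let the operator count of an expression be the number of occurrences of these operators in it. Each expression defines a function $f(x)$ wherever it is defined. Say that $f$ is admissible if: (1) $f$ is defined on all of $\mathbb{R}^+=(0,\infty)$ and takes values in $[0,1]$; (2) $f(1)=\tfrac12$; (3) $\lim_{x\to 0} f(x)=0$; (4) $\lim_{x\to\infty} f(x)=1$. Then no expression with operator count $0$ or $1$ defines an admissible function, and every expression with operator count exactly $2$ that defines an admissible function defines $f(x)=\dfrac{x}{1+x}$ (which is admissible). Consequently, with $x=\pi_i/\pi_j$ for positive strengths $\pi_i,\pi_j$, the unique admissible function of minimal operator count gives $f(\pi_i/\pi_j)=\dfrac{\pi_i}{\pi_i+\pi_j}$.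
   Context: Here $x=x_{ij}=\pi_i/\pi_j$ is the ratio of positive strength parameters of items $i$ and $j$, and $f(x_{ij})$ is intended as the probability that $i$ is preferred to $j$ in a pairwise comparison. Constants may appear in place of the variable at no cost in the operator count; parentheses do not count as operators. *)

(* Defs.v *)
From Stdlib Require Import Reals.
Open Scope R_scope.

(* Formal expressions in one variable x and real constants, built with the
   binary operators + - * / (parentheses are implicit in the tree structure). *)
Inductive expr : Type :=
| EVar : expr
| EConst : R -> expr
| EAdd : expr -> expr -> expr
| ESub : expr -> expr -> expr
| EMul : expr -> expr -> expr
| EDiv : expr -> expr -> expr.

Fixpoint opcount (e : expr) : nat :=
  match e with
  | EVar | EConst _ => 0
  | EAdd a b | ESub a b | EMul a b | EDiv a b => S (opcount a + opcount b)
  end.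

Fixpoint eval (e : expr) (x : R) : option R :=
  match e with
  | EVar => Some x
  | EConst c => Some c
  | EAdd a b => match eval a x, eval b x with Some u, Some v => Some (u + v) | _, _ => None end
  | ESub a b => match eval a x, eval b x with Some u, Some v => Some (u - v) | _, _ => None end
  | EMul a b => match eval a x, eval b x with Some u, Some v => Some (u * v) | _, _ => None end
  | EDiv a b => match eval a x, eval b x with
                | Some u, Some v => if Req_EM_T v 0 then None else Some (u / v)
                | _, _ => None end
  end.

Definition admissible (e : expr) : Prop :=
  (forall x, 0 < x -> exists v, eval e x = Some v /\ 0 <= v <= 1) /\
  eval e 1 = Some (1/2) /\
  (forall eps, 0 < eps -> exists delta, 0 < delta /\
     forall x v, 0 < x < delta -> eval e x = Some v -> Rabs v < eps) /\
  (forall eps, 0 < eps -> exists M, forall x v, M < x -> eval e x = Some v ->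
     Rabs (v - 1) < eps).

(* Main.v *)
Require Import Defs.
From Stdlib Require Import Reals Lra Lia Psatz.
Open Scope R_scope.

Definition Adm (f : R -> R) :=
  (forall x, 0 < x -> 0 <= f x <= 1) /\ f 1 = 1/2 /\
  (forall eps, 0 < eps -> exists delta, 0 < delta /\ forall x, 0 < x < delta -> Rabs (f x) < eps) /\
  (forall eps, 0 < eps -> exists M, forall x, M < x -> 0 < x -> Rabs (f x - 1) < eps).

Lemma L_const f k : Adm f -> (forall x, 0 < x -> f x = k) -> False.
Proof.
  intros [HB [H1 [H0 _]]] Hf. rewrite Hf in H1 by lra.
  destruct (H0 (1/2)) as [d [Hd Hd']]; [lra|].
  specialize (Hd' (d/2) ltac:(lra)). rewrite Hf, H1 in Hd' by lra.
  rewrite Rabs_right in Hd' by lra. lra.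
Qed.

Lemma L_HL f a b c : Adm f -> (forall x, 0 < x -> f x = a + b*x + c/x) -> False.
Proof.
  intros HA Hf. pose proof HA as [HB [H1 _]].
  assert (I1 : forall x, 0 < x -> 3*f(2*x) - f x - 2*f(4*x) = -3*(b*x)).
  { intros x Hx. rewrite !Hf by lra. field. lra. }
  assert (I2 : forall x, 0 < x -> 3*f(2*x) - 2*f x - f(4*x) = -(3/4)*(c/x)).
  { intros x Hx. rewrite !Hf by lra. field. lra. }
  assert (Hb : b = 0).
  { destruct (Rtotal_order b 0) as [Hb|[Hb|Hb]]; auto; exfalso.
    - set (x := -2/b). assert (Hx : 0 < x) by (unfold x; apply Rdiv_neg_neg; lra).
      assert (E : b*x = -2) by (unfold x; field; lra).
      specialize (I1 x Hx). rewrite E in I1.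
      pose proof (HB x Hx); pose proof (HB (2*x) ltac:(lra)); pose proof (HB (4*x) ltac:(lra)). lra.
    - set (x := 2/b). assert (Hx : 0 < x) by (unfold x; apply Rdiv_lt_0_compat; lra).
      assert (E : b*x = 2) by (unfold x; field; lra).
      specialize (I1 x Hx). rewrite E in I1.
      pose proof (HB x Hx); pose proof (HB (2*x) ltac:(lra)); pose proof (HB (4*x) ltac:(lra)). lra. }
  assert (Hc : c = 0).
  { destruct (Rtotal_order c 0) as [Hc|[Hc|Hc]]; auto; exfalso.
    - set (x := -c/8). assert (Hx : 0 < x) by (unfold x; lra).
      assert (E : c/x = -8) by (unfold x; field; lra).
      specialize (I2 x Hx). rewrite E in I2.
      pose proof (HB x Hx); pose proof (HB (2*x) ltac:(lra)); pose proof (HB (4*x) ltac:(lra)). lra.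
    - set (x := c/8). assert (Hx : 0 < x) by (unfold x; lra).
      assert (E : c/x = 8) by (unfold x; field; lra).
      specialize (I2 x Hx). rewrite E in I2.
      pose proof (HB x Hx); pose proof (HB (2*x) ltac:(lra)); pose proof (HB (4*x) ltac:(lra)). lra. }
  apply (L_const f a HA). intros x Hx. rewrite Hf by lra. subst. field. lra.
Qed.

Lemma L_quad f a b c : Adm f -> (forall x, 0 < x -> f x = a*(x*x) + b*x + c) -> False.
Proof.
  intros HA Hf. pose proof HA as [HB [H1 _]].
  assert (I1 : forall x, 0 < x -> f x - 2*f(2*x) + f(3*x) = 2*(a*(x*x))).
  { intros x Hx. rewrite !Hf by lra. ring. }
  assert (Ha : a = 0).
  { destruct (Rtotal_order a 0) as [Ha|[Ha|Ha]]; auto; exfalso.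
    - set (x := 1 - /a). assert (Hia : / a < 0) by (apply Rinv_lt_0_compat; lra).
      assert (Hx : 1 <= x) by (unfold x; lra).
      assert (E : a*x = a - 1) by (unfold x; field; lra).
      assert (E2 : a*(x*x) <= a - 1) by (replace (a*(x*x)) with ((a*x)*x) by ring; rewrite E; nra).
      specialize (I1 x ltac:(lra)).
      pose proof (HB x ltac:(lra)); pose proof (HB (2*x) ltac:(lra)); pose proof (HB (3*x) ltac:(lra)). lra.
    - set (x := 1 + /a). assert (Hia : 0 < / a) by (apply Rinv_0_lt_compat; lra).
      assert (Hx : 1 <= x) by (unfold x; lra).
      assert (E : a*x = a + 1) by (unfold x; field; lra).
      assert (E2 : a*(x*x) >= a + 1) by (replace (a*(x*x)) with ((a*x)*x) by ring; rewrite E; nra).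
      specialize (I1 x ltac:(lra)).
      pose proof (HB x ltac:(lra)); pose proof (HB (2*x) ltac:(lra)); pose proof (HB (3*x) ltac:(lra)). lra. }
  apply (L_HL f c b 0 HA). intros x Hx. rewrite Hf by lra. subst. field. lra.
Qed.

Lemma L_inv2 f b : Adm f -> (forall x, 0 < x -> f x = b/(x*x)) -> False.
Proof.
  intros [HB [H1 _]] Hf. rewrite Hf in H1 by lra.
  assert (b = 1/2) by (rewrite <- H1; field).
  pose proof (HB (1/2) ltac:(lra)). rewrite Hf in H0 by lra. subst b.
  replace (1/2/(1/2*(1/2))) with 2 in H0 by field. lra.
Qed.

Lemma L_moeb f a b : Adm f -> (forall x, 0 < x -> a*x+b <> 0) ->
  (forall x, 0 < x -> f x = x/(a*x+b)) -> a = 1 /\ b = 1.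
Proof.
  intros [HB [H1 [_ Hi]]] Hnz Hf.
  assert (Hab : a + b = 2).
  { assert (N1 := Hnz 1 ltac:(lra)). rewrite Hf in H1 by lra.
    assert (N2 : a + b <> 0) by (replace (a+b) with (a*1+b) by ring; auto).
    assert (E : 1/(a*1+b)*(a*1+b) = 1) by (field; auto). rewrite H1 in E. lra. }
  assert (Key : forall eps, 0 < eps <= 1/2 -> -(16*eps) <= a - 1 <= 16*eps).
  { intros eps Heps. destruct (Hi eps ltac:(lra)) as [M HM].
    set (x := Rmax M 0 + 1).
    assert (Hx0 : 0 < x) by (unfold x; pose proof (Rmax_r M 0); lra).
    assert (HxM : M < x) by (unfold x; pose proof (Rmax_l M 0); lra).
    pose proof (HM x HxM Hx0) as A1. pose proof (HM (2*x) ltac:(lra) ltac:(lra)) as A2.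
    apply Rabs_def2 in A1. apply Rabs_def2 in A2.
    assert (Id : a * (f x * f (2*x)) = 2 * f x - f (2*x)).
    { rewrite !Hf by lra. pose proof (Hnz x Hx0). pose proof (Hnz (2*x) ltac:(lra)).
      field. repeat split; auto. }
    set (v1 := f x) in *. set (v2 := f (2*x)) in *.
    assert (P : v1*v2 >= 1/4) by nra.
    assert (Q : (a-1)*(v1*v2) = (v1-1) - 2*(v2-1) - (v1-1)*(v2-1)) by nra.
    assert (R1 : (v1-1)*(v2-1) <= eps*eps) by nra.
    assert (R2 : (v1-1)*(v2-1) >= -(eps*eps)) by nra.
    assert (eps*eps <= eps/2) by nra.
    split; nra. }
  assert (Ha : a = 1).
  { destruct (Rtotal_order a 1) as [Ha|[Ha|Ha]]; auto; exfalso.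
    - set (eps := Rmin (1/2) ((1-a)/64)).
      assert (eps <= (1-a)/64) by apply Rmin_r. assert (eps <= 1/2) by apply Rmin_l.
      assert (0 < eps) by (unfold eps; apply Rmin_pos; lra).
      destruct (Key eps ltac:(lra)). lra.
    - set (eps := Rmin (1/2) ((a-1)/64)).
      assert (eps <= (a-1)/64) by apply Rmin_r. assert (eps <= 1/2) by apply Rmin_l.
      assert (0 < eps) by (unfold eps; apply Rmin_pos; lra).
      destruct (Key eps ltac:(lra)). lra. }
  lra.
Qed.

Lemma L_moeb2 f d a b : Adm f -> (forall x, 0 < x -> a*x+b <> 0) ->
  (forall x, 0 < x -> f x = d/(a*x+b)) -> False.
Proof.
  intros HA Hnz Hf. pose proof HA as [HB [H1 [_ Hi]]].
  assert (Hd : d <> 0).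
  { intro Hd. rewrite Hf in H1 by lra. rewrite Hd in H1.
    assert (N1 := Hnz 1 ltac:(lra)). unfold Rdiv in H1. rewrite Rmult_0_l in H1. lra. }
  assert (Ha : a = 0).
  { destruct (Req_dec a 0) as [|Ha]; auto; exfalso.
    destruct (Hi (1/8) ltac:(lra)) as [M HM].
    set (x := Rmax M 0 + 1 + Rabs (d/a)).
    pose proof (Rabs_pos (d/a)).
    assert (Hx0 : 0 < x) by (unfold x; pose proof (Rmax_r M 0); lra).
    assert (HxM : M < x) by (unfold x; pose proof (Rmax_l M 0); lra).
    assert (Hxd : Rabs (d/a) <= x) by (unfold x; pose proof (Rmax_r M 0); lra).
    assert (Sq : (d/a)*(d/a) <= x*x).
    { replace ((d/a)*(d/a)) with (Rabs (d/a) * Rabs (d/a)).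
      - nra.
      - rewrite <- Rabs_mult. apply Rabs_right. nra. }
    assert (Sq2 : d*d <= (a*x)*(a*x)).
    { replace (d*d) with ((a*a)*((d/a)*(d/a))) by (field; auto).
      replace ((a*x)*(a*x)) with ((a*a)*(x*x)) by ring.
      apply Rmult_le_compat_l; nra. }
    pose proof (HM x HxM Hx0) as A1. pose proof (HM (2*x) ltac:(lra) ltac:(lra)) as A2.
    apply Rabs_def2 in A1. apply Rabs_def2 in A2.
    assert (Id : d * (f x - f (2*x)) = (a*x) * (f x * f (2*x))).
    { rewrite !Hf by lra. pose proof (Hnz x Hx0). pose proof (Hnz (2*x) ltac:(lra)).
      field. repeat split; auto. }
    set (v1 := f x) in *. set (v2 := f (2*x)) in *.
    assert (P : v1*v2 >= 49/64) by nra.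
    assert (P2 : (v1*v2)*(v1*v2) >= 1/2) by nra.
    assert (Q : (v1-v2)*(v1-v2) <= 1/16) by nra.
    assert (Id2 : (d*d)*((v1-v2)*(v1-v2)) = ((a*x)*(a*x))*((v1*v2)*(v1*v2))).
    { replace ((d*d)*((v1-v2)*(v1-v2))) with ((d*(v1-v2))*(d*(v1-v2))) by ring.
      rewrite Id. ring. }
    assert (Dp : 0 < d*d) by (assert (d < 0 \/ 0 < d) by (destruct (Rtotal_order d 0) as [|[|]]; auto; contradiction); nra).
    nra. }
  apply (L_const f (d/b) HA). intros x Hx. rewrite Hf by lra. subst a.
  f_equal. ring.
Qed.

Fixpoint sem (e : expr) (x : R) : R :=
  match e with
  | EVar => x | EConst c => c
  | EAdd a b => sem a x + sem b x
  | ESub a b => sem a x - sem b x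
  | EMul a b => sem a x * sem b x
  | EDiv a b => sem a x / sem b x
  end.

Fixpoint ok (e : expr) (x : R) : Prop :=
  match e with
  | EVar | EConst _ => True
  | EAdd a b | ESub a b | EMul a b => ok a x /\ ok b x
  | EDiv a b => ok a x /\ ok b x /\ sem b x <> 0
  end.

Lemma eval_sem e x v : eval e x = Some v -> v = sem e x /\ ok e x.
Proof.
  revert v; induction e; intros v H; simpl in *.
  - inversion H; auto.
  - inversion H; auto.
  - destruct (eval e1 x) eqn:E1; destruct (eval e2 x) eqn:E2; try discriminate.
    destruct (IHe1 r eq_refl), (IHe2 r0 eq_refl). inversion H; subst; auto.
  - destruct (eval e1 x) eqn:E1; destruct (eval e2 x) eqn:E2; try discriminate.
    destruct (IHe1 r eq_refl), (IHe2 r0 eq_refl). inversion H; subst; auto.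
  - destruct (eval e1 x) eqn:E1; destruct (eval e2 x) eqn:E2; try discriminate.
    destruct (IHe1 r eq_refl), (IHe2 r0 eq_refl). inversion H; subst; auto.
  - destruct (eval e1 x) eqn:E1; destruct (eval e2 x) eqn:E2; try discriminate.
    destruct (IHe1 r eq_refl), (IHe2 r0 eq_refl).
    destruct (Req_EM_T r0 0); try discriminate. inversion H; subst; auto.
Qed.

Lemma sem_eval e x : ok e x -> eval e x = Some (sem e x).
Proof.
  induction e; simpl; intros H; auto.
  - destruct H as [H1 H2]. rewrite IHe1, IHe2 by auto. reflexivity.
  - destruct H as [H1 H2]. rewrite IHe1, IHe2 by auto. reflexivity.
  - destruct H as [H1 H2]. rewrite IHe1, IHe2 by auto. reflexivity.
  - destruct H as [H1 [H2 H3]]. rewrite IHe1, IHe2 by auto.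
    destruct (Req_EM_T (sem e2 x) 0); [contradiction|reflexivity].
Qed.

Lemma adm_sem e : admissible e -> Adm (sem e) /\ forall x, 0 < x -> ok e x.
Proof.
  intros [H1 [H2 [H3 H4]]].
  assert (Hok : forall x, 0 < x -> ok e x /\ 0 <= sem e x <= 1).
  { intros x Hx. destruct (H1 x Hx) as [v [Hv Hb]]. destruct (eval_sem _ _ _ Hv). subst; auto. }
  split; [|intros x Hx; exact (proj1 (Hok x Hx))].
  split; [intros x Hx; exact (proj2 (Hok x Hx))|].
  split; [destruct (eval_sem _ _ _ H2); auto|].
  split.
  - intros eps Heps. destruct (H3 eps Heps) as [d [Hd Hd']]. exists d; split; auto.
    intros x Hx. apply (Hd' x); auto. apply sem_eval. apply (Hok x). lra.
  - intros eps Heps. destruct (H4 eps Heps) as [M HM]. exists M.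
    intros x Hx Hx0. apply (HM x); auto. apply sem_eval. apply (Hok x). lra.
Qed.

Definition Cl0 (g : R -> R) := (forall x, 0 < x -> g x = x) \/ (exists d, forall x, 0 < x -> g x = d).
Definition Cl1 (g : R -> R) := (exists a b, forall x, 0 < x -> g x = a*x+b) \/
  (forall x, 0 < x -> g x = x*x) \/ (exists c, forall x, 0 < x -> g x = c/x).

Lemma cls0 g : opcount g = 0%nat -> Cl0 (sem g).
Proof.
  destruct g; simpl; intros H; try discriminate.
  - left; auto.
  - right; exists r; auto.
Qed.

Lemma cls1 g : (opcount g <= 1)%nat -> Cl1 (sem g).
Proof.
  destruct g as [|c|A B|A B|A B|A B]; simpl; intros H.
  - left; exists 1, 0; intros; ring.
  - left; exists 0, c; intros; ring.
  - destruct A as [|c|? ?|? ?|? ?|? ?]; simpl in H; try lia;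
    destruct B as [|d|? ?|? ?|? ?|? ?]; simpl in H; try lia; simpl.
    + left; exists 2, 0; intros; ring.
    + left; exists 1, d; intros; ring.
    + left; exists 1, c; intros; ring.
    + left; exists 0, (c+d); intros; ring.
  - destruct A as [|c|? ?|? ?|? ?|? ?]; simpl in H; try lia;
    destruct B as [|d|? ?|? ?|? ?|? ?]; simpl in H; try lia; simpl.
    + left; exists 0, 0; intros; ring.
    + left; exists 1, (-d); intros; ring.
    + left; exists (-1), c; intros; ring.
    + left; exists 0, (c-d); intros; ring.
  - destruct A as [|c|? ?|? ?|? ?|? ?]; simpl in H; try lia;
    destruct B as [|d|? ?|? ?|? ?|? ?]; simpl in H; try lia; simpl.
    + right; left; intros; ring.
    + left; exists d, 0; intros; ring.
    + left; exists c, 0; intros; ring.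
    + left; exists 0, (c*d); intros; ring.
  - destruct A as [|c|? ?|? ?|? ?|? ?]; simpl in H; try lia;
    destruct B as [|d|? ?|? ?|? ?|? ?]; simpl in H; try lia; simpl.
    + left; exists 0, 1; intros; field; lra.
    + left; exists (/d), 0; intros; unfold Rdiv; ring.
    + right; right; exists c; intros; reflexivity.
    + left; exists 0, (c/d); intros; ring.
Qed.

Ltac eqn := intros ?x ?Hx; cbv beta;
  repeat match goal with H : forall x, 0 < x -> _ = _ |- _ => rewrite H by lra end;
  first [ring | field; repeat split; first [lra | assumption]].
Ltac Q a b c := match goal with Had : Adm _ |- _ => apply (L_quad _ a b c Had); eqn end.
Ltac HL a b c := match goal with Had : Adm _ |- _ => apply (L_HL _ a b c Had); eqn end.
Ltac I2 b := match goal with Had : Adm _ |- _ => apply (L_inv2 _ b Had); eqn end.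

Lemma op_add fA fB : (Cl0 fA /\ Cl1 fB) \/ (Cl1 fA /\ Cl0 fB) ->
  Adm (fun x => fA x + fB x) -> False.
Proof.
  intros [[HA HB]|[HA HB]] Had.
  - destruct HA as [HA|[d HA]]; destruct HB as [[a [b HB]]|[HB|[c HB]]].
    + Q 0 (a+1) b.
    + Q 1 1 0.
    + HL 0 1 c.
    + Q 0 a (b+d).
    + Q 1 0 d.
    + HL d 0 c.
  - destruct HA as [[a [b HA]]|[HA|[c HA]]]; destruct HB as [HB|[d HB]].
    + Q 0 (a+1) b.
    + Q 0 a (b+d).
    + Q 1 1 0.
    + Q 1 0 d.
    + HL 0 1 c.
    + HL d 0 c.
Qed.

Lemma op_sub fA fB : (Cl0 fA /\ Cl1 fB) \/ (Cl1 fA /\ Cl0 fB) ->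
  Adm (fun x => fA x - fB x) -> False.
Proof.
  intros [[HA HB]|[HA HB]] Had.
  - destruct HA as [HA|[d HA]]; destruct HB as [[a [b HB]]|[HB|[c HB]]].
    + Q 0 (1-a) (-b).
    + Q (-1) 1 0.
    + HL 0 1 (-c).
    + Q 0 (-a) (d-b).
    + Q (-1) 0 d.
    + HL d 0 (-c).
  - destruct HA as [[a [b HA]]|[HA|[c HA]]]; destruct HB as [HB|[d HB]].
    + Q 0 (a-1) b.
    + Q 0 a (b-d).
    + Q 1 (-1) 0.
    + Q 1 0 (-d).
    + HL 0 (-1) c.
    + HL (-d) 0 c.
Qed.

Lemma cube_kill f : Adm f -> (forall x, 0 < x -> f x = x*(x*x)) -> False.
Proof. intros [_ [H1 _]] Hf. rewrite Hf in H1 by lra. lra. Qed.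

Lemma op_mul fA fB : (Cl0 fA /\ Cl1 fB) \/ (Cl1 fA /\ Cl0 fB) ->
  Adm (fun x => fA x * fB x) -> False.
Proof.
  intros [[HA HB]|[HA HB]] Had.
  - destruct HA as [HA|[d HA]]; destruct HB as [[a [b HB]]|[HB|[c HB]]].
    + Q a b 0.
    + apply (cube_kill _ Had); eqn.
    + Q 0 0 c.
    + Q 0 (d*a) (d*b).
    + Q d 0 0.
    + HL 0 0 (d*c).
  - destruct HA as [[a [b HA]]|[HA|[c HA]]]; destruct HB as [HB|[d HB]].
    + Q a b 0.
    + Q 0 (d*a) (d*b).
    + apply (cube_kill _ Had); eqn.
    + Q d 0 0.
    + Q 0 0 c.
    + HL 0 0 (d*c).
Qed.

Lemma op_div fA fB : (Cl0 fA /\ Cl1 fB) \/ (Cl1 fA /\ Cl0 fB) ->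
  (forall x, 0 < x -> fB x <> 0) ->
  Adm (fun x => fA x / fB x) -> forall x, 0 < x -> fA x / fB x = x / (1 + x).
Proof.
  intros [[HA HB]|[HA HB]] Hnz Had.
  - destruct HA as [HA|[d HA]]; destruct HB as [[a [b HB]]|[HB|[c HB]]].
    + assert (Hn : forall x, 0 < x -> a*x+b <> 0) by (intros x Hx; rewrite <- HB by lra; auto).
      destruct (L_moeb _ a b Had Hn) as [-> ->]; [eqn|].
      intros x Hx. rewrite HA, HB by lra. f_equal. ring.
    + exfalso. HL 0 0 1.
    + exfalso. assert (c <> 0) by (intro; subst c; apply (Hnz 1); [lra|]; rewrite HB by lra; field).
      Q (/c) 0 0.
    + exfalso. assert (Hn : forall x, 0 < x -> a*x+b <> 0) by (intros x Hx; rewrite <- HB by lra; auto).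
      apply (L_moeb2 _ d a b Had Hn); eqn.
    + exfalso. I2 d.
    + exfalso. assert (c <> 0) by (intro; subst c; apply (Hnz 1); [lra|]; rewrite HB by lra; field).
      Q 0 (d/c) 0.
  - exfalso. destruct HA as [[a [b HA]]|[HA|[c HA]]]; destruct HB as [HB|[d HB]].
    + HL a 0 b.
    + assert (d <> 0) by (intro; subst d; apply (Hnz 1); [lra|]; rewrite HB by lra; auto).
      Q 0 (a/d) (b/d).
    + Q 0 1 0.
    + assert (d <> 0) by (intro; subst d; apply (Hnz 1); [lra|]; rewrite HB by lra; auto).
      Q (/d) 0 0.
    + I2 c.
    + assert (d <> 0) by (intro; subst d; apply (Hnz 1); [lra|]; rewrite HB by lra; auto).
      HL 0 0 (c/d).
Qed.

Lemma part1 e : (opcount e <= 1)%nat -> ~ admissible e.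
Proof.
  intros H Hadm. destruct (adm_sem e Hadm) as [Had _].
  destruct (cls1 e H) as [[a [b HA]]|[HA|[c HA]]].
  - apply (L_quad _ 0 a b Had); intros x Hx; rewrite HA by lra; ring.
  - apply (L_quad _ 1 0 0 Had); intros x Hx; rewrite HA by lra; ring.
  - apply (L_HL _ 0 0 c Had); intros x Hx; rewrite HA by lra; ring.
Qed.

Lemma part2 e : opcount e = 2%nat -> admissible e ->
  forall x, 0 < x -> eval e x = Some (x / (1 + x)).
Proof.
  intros H Hadm x Hx. destruct (adm_sem e Hadm) as [Had Hok].
  rewrite (sem_eval e x (Hok x Hx)).
  destruct e as [|c|A B|A B|A B|A B]; simpl in H; try discriminate;
  assert (HC : (Cl0 (sem A) /\ Cl1 (sem B)) \/ (Cl1 (sem A) /\ Cl0 (sem B)))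
    by (destruct (opcount A) as [|[|]] eqn:EA; destruct (opcount B) as [|[|]] eqn:EB; try lia;
        [left; split; [apply cls0|apply cls1]; lia | right; split; [apply cls1|apply cls0]; lia]).
  - exfalso; exact (op_add _ _ HC Had).
  - exfalso; exact (op_sub _ _ HC Had).
  - exfalso; exact (op_mul _ _ HC Had).
  - f_equal. apply (op_div _ _ HC); auto.
    intros y Hy. exact (proj2 (proj2 (Hok y Hy))).
Qed.

Theorem mainTheorem2 :
  (forall e : expr, (opcount e <= 1)%nat -> ~ admissible e) /\
  (forall e : expr, opcount e = 2%nat -> admissible e ->
     forall x, 0 < x -> eval e x = Some (x / (1 + x))) /\
  (exists e : expr, opcount e = 2%nat /\ admissible e /\
     forall x, 0 < x -> eval e x = Some (x / (1 + x))) /\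
  (forall e : expr, opcount e = 2%nat -> admissible e ->
     forall pi pj, 0 < pi -> 0 < pj -> eval e (pi / pj) = Some (pi / (pi + pj))).
Proof.
  split; [exact part1|]. split; [exact part2|]. split.
  - assert (Hev : forall x, 0 < x -> eval (EDiv EVar (EAdd (EConst 1) EVar)) x = Some (x / (1 + x))).
    { intros x Hx. simpl. destruct (Req_EM_T (1 + x) 0); [lra|reflexivity]. }
    exists (EDiv EVar (EAdd (EConst 1) EVar)). split; [reflexivity|]. split; [|exact Hev].
    split; [|split; [|split]].
    + intros x Hx. exists (x/(1+x)). split; [auto|].
      split; [unfold Rdiv; apply Rmult_le_pos; [lra | left; apply Rinv_0_lt_compat; lra]|].
      apply (Rmult_le_reg_r (1+x)); [lra|]. unfold Rdiv. rewrite Rmult_assoc, Rinv_l by lra. lra.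
    + rewrite Hev by lra. f_equal; try field; try lra.
    + intros eps Heps. exists eps. split; auto. intros x v Hx Hv.
      rewrite Hev in Hv by lra. inversion Hv; subst.
      assert (0 <= x/(1+x) <= x).
      { split; [unfold Rdiv; apply Rmult_le_pos; [lra | left; apply Rinv_0_lt_compat; lra]|].
        apply (Rmult_le_reg_r (1+x)); [lra|]. unfold Rdiv. rewrite Rmult_assoc, Rinv_l by lra. nra. }
      rewrite Rabs_right by lra. lra.
    + intros eps Heps. exists (Rmax 0 (/eps)). intros x v Hx Hv.
      pose proof (Rmax_l 0 (/eps)). pose proof (Rmax_r 0 (/eps)).
      rewrite Hev in Hv by lra. inversion Hv; subst.
      replace (x/(1+x) - 1) with (-(/(1+x))) by (field; lra).
      rewrite Rabs_Ropp, Rabs_right by (left; apply Rinv_0_lt_compat; lra).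
      assert (/eps < 1 + x) by lra.
      apply Rinv_lt_contravar in H1; [|apply Rmult_lt_0_compat; [apply Rinv_0_lt_compat|]; lra].
      rewrite Rinv_inv in H1. exact H1.
  - intros e H Hadm pi pj Hi Hj.
    assert (0 < pi/pj) by (apply Rdiv_lt_0_compat; auto).
    rewrite (part2 e H Hadm _ H0). f_equal. field. lra.
Qed.
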